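(* Let $\alpha,\beta,\gamma$ be real numbers with $\gamma>0$ and $(\alpha,\beta)\neq(0,0)$, and consider the discrete-time linear system $$A(t+1) = (1-\alpha\gamma)A(t) + \alpha\gamma B(t),\qquad B(t+1) = (1-\beta\gamma)B(t) + \beta\gamma A(t).$$ If $1-\alpha\gamma-\beta\gamma = 1$, then the system is unstable: there exist initial values $(A(0),B(0))\in\mathbb{R}^2$ for which the trajectory $(A(t),B(t))_{t\ge 0}$ is unbounded.
   Context: The transition matrix of the system is $M=\begin{bmatrix}1-\alpha\gamma & \alpha\gamma\\ \beta\gamma & 1-\beta\gamma\end{bmatrix}$; its eigenvalues are $1$ and $1-\alpha\gamma-\beta\gamma$, so in the case considered both eigenvalues equal $1$ (the system would be called marginally stable by the eigenvalue criterion), and the claim is that the trajectories nevertheless diverge. *)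

(* Defs.v *)
From Stdlib Require Import Reals.
Open Scope R_scope.

Fixpoint traj (alpha beta gamma A0 B0 : R) (t : nat) : R * R :=
  match t with
  | O => (A0, B0)
  | S t' =>
      let '(a, b) := traj alpha beta gamma A0 B0 t' in
      ((1 - alpha * gamma) * a + alpha * gamma * b,
       (1 - beta * gamma) * b + beta * gamma * a)
  end.

(* Main.v *)
Require Import Defs.
From Stdlib Require Import Reals Lra.
Open Scope R_scope.

Lemma traj_form (alpha beta gamma : R) (t : nat) :
  beta * gamma = - (alpha * gamma) ->
  traj alpha beta gamma 1 0 t = (1 - INR t * (alpha * gamma), - (INR t * (alpha * gamma))).
Proof.
  intro H. induction t as [|t IH].
  - simpl. f_equal; ring.
  - simpl traj. rewrite IH. rewrite S_INR. rewrite H. f_equal; ring.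
Qed.

Theorem proposition3 (alpha beta gamma : R) :
  gamma > 0 ->
  (alpha, beta) <> (0, 0) ->
  1 - alpha * gamma - beta * gamma = 1 ->
  exists A0 B0 : R,
    ~ (exists M : R, forall t : nat,
          Rabs (fst (traj alpha beta gamma A0 B0 t)) <= M /\
          Rabs (snd (traj alpha beta gamma A0 B0 t)) <= M).
Proof.
  intros Hg Hab Heq.
  assert (Hb : beta * gamma = - (alpha * gamma)) by lra.
  assert (Hc : alpha * gamma <> 0).
  { intro Hz. apply Hab. assert (alpha = 0).
    { destruct (Rmult_integral _ _ Hz); lra. }
    subst alpha. assert (beta * gamma = 0) by lra.
    destruct (Rmult_integral _ _ H); [subst; reflexivity | lra]. }
  exists 1, 0. intros [M HM].
  destruct (INR_archimed (Rabs (alpha * gamma)) M) as [n Hn].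
  { apply Rabs_pos_lt; assumption. }
  destruct (HM n) as [_ H2].
  rewrite traj_form in H2 by assumption. simpl snd in H2.
  rewrite Rabs_Ropp, Rabs_mult, (Rabs_right (INR n)) in H2.
  - lra.
  - apply Rle_ge, pos_INR.
Qed.
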